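(* Let $H$ be a finite-dimensional Hopf algebra over a field $\Bbbk$ and $B$ a right $H$-comodule algebra. Let $\mathcal{E}$ be the class of short exact sequences $0\to M\xrightarrow{f}N\xrightarrow{g}L\to0$ of $B$-modules such that $0\to M\otimes H\xrightarrow{f\otimes\mathrm{Id}_H}N\otimes H\xrightarrow{g\otimes\mathrm{Id}_H}L\otimes H\to0$ is split exact as a sequence of $B$-modules. Then $\mathcal{E}$ (as the class of conflations, with inflations the first maps and deflations the second maps of such sequences) defines an exact structure on the category of $B$-modules in the sense of Quillen.
   Context: $H$ has comultiplication $\Delta(h)=\sum h_1\otimes h_2$, counit $\epsilon$, antipode $S$. A right $H$-comodule algebra is a unital $\Bbbk$-algebra $B$ with a unital algebra map $\Delta_B:B\to B\otimes H$, $\Delta_B(b)=\sum b_1\otimes b_2$, coassociative and counital. For a $B$-module $M$ and $H$-module $U$, $M\otimes U$ is a $B$-module via $b\cdot(x\otimes u)=\sum b_1x\otimes b_2u$; $H$ is the left regular $H$-module. An exact structure on an additive category is a class of kernel-cokernel pairs (conflations) such that the identity of $0$ is a deflation, compositions of deflations (resp. inflations) are deflations (resp. inflations), deflations are stable under pullback and inflations under pushout. *)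

(* Defs.v *)
From HB Require Import structures.
From mathcomp Require Import all_boot all_order all_algebra.
From mathcomp Require Import falgebra.
Set Implicit Arguments. Unset Strict Implicit. Unset Printing Implicit Defensive.
Import GRing.Theory.
Local Open Scope ring_scope.

(* Tensor products V (x) H with the finite-dimensional algebra H are encoded
   through the fixed basis hb of H:  a tensor  sum_i v_i (x) hb i  is the
   finite function  i |-> v_i.  *)
Section Tensors.
Variables (k : fieldType) (H : falgType k).

Definition hn : nat := \dim (fullv : {vspace H}).
Definition hb (i : 'I_hn) : H := tnth (vbasis (fullv : {vspace H})) i.
Definition hc (i : 'I_hn) (h : H) : k := coord (vbasis (fullv : {vspace H})) i h.

Definition tens (A : Type) := {ffun 'I_hn -> A}.

(* unit 1 (x) 1 and product (a (x) h)(a' (x) h') = a a' (x) h h' in A (x) H *)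
Definition tone (A : algType k) : tens A := [ffun l => hc l 1 *: (1 : A)].
Definition tmul (A : algType k) (t s : tens A) : tens A :=
  [ffun l => \sum_(i < hn) \sum_(j < hn) hc l (hb i * hb j) *: (t i * s j)].

Definition tmap (A A' : Type) (phi : A -> A') (t : tens A) : tens A' :=
  [ffun i => phi (t i)].

(* (id (x) Delta) : A (x) H -> (A (x) H) (x) H, outer index = last factor *)
Definition idtD (A : lmodType k) (D : H -> tens H) (t : tens A) : tens (tens A) :=
  [ffun l => [ffun j => \sum_(i < hn) hc j (D (hb i) l) *: t i]].

Definition is_hopf (D : H -> tens H) (eps : H -> k) (S : H -> H) : Prop :=
  [/\ (forall (a : k) (x y : H), D (a *: x + y) = a *: D x + D y),
      (forall (a : k) (x y : H), eps (a *: x + y) = a * eps x + eps y),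
      (forall (a : k) (x y : H), S (a *: x + y) = a *: S x + S y),
      (forall h : H, tmap D (D h) = idtD D (D h))
      & [/\ (forall h : H, \sum_(i < hn) eps (D h i) *: hb i = h),
            (forall h : H, \sum_(i < hn) eps (hb i) *: D h i = h),
            D 1 = tone H /\ (forall g h : H, D (g * h) = tmul (D g) (D h)),
            eps 1 = 1 /\ (forall g h : H, eps (g * h) = eps g * eps h)
          &
            (forall h : H, \sum_(i < hn) S (D h i) * hb i = eps h *: 1) /\
            (forall h : H, \sum_(i < hn) D h i * S (hb i) = eps h *: 1)]].

Definition is_comod_alg (D : H -> tens H) (eps : H -> k)
    (B : algType k) (DB : B -> tens B) : Prop :=
  [/\ (forall (a : k) (x y : B), DB (a *: x + y) = a *: DB x + DB y),
      DB 1 = tone B,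
      (forall x y : B, DB (x * y) = tmul (DB x) (DB y)),
      (forall b : B, tmap DB (DB b) = idtD D (DB b))
    & (forall b : B, \sum_(i < hn) eps (hb i) *: DB b i = b)].

Section Modules.
Variables (B : algType k) (DB : B -> tens B).

(* the B-module M (x) H:  b.(x (x) h) = sum b_0 x (x) b_1 h.
   (The k-action on a B-module is through c |-> c%:A.)
   NB: only the additive structure of {ffun _ -> M} is used; the B-action
   on M (x) H is tact, not the pointwise one. *)
Definition tact (M : lmodType B) (b : B) (t : tens M) : tens M :=
  [ffun l => \sum_(i < hn) \sum_(j < hn)
               ((hc l (hb i * hb j))%:A : B) *: (DB b i *: t j)].

Definition Blin (M N : lmodType B) (f : M -> N) : Prop :=
  forall (a : B) (x y : M), f (a *: x + y) = a *: f x + f y.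

Definition tBlin (M N : lmodType B) (F : tens M -> tens N) : Prop :=
  forall (a : B) (t s : tens M), F (tact a t + s) = tact a (F t) + F s.

Definition split_exact_tens (M N L : lmodType B)
    (F : tens M -> tens N) (G : tens N -> tens L) : Prop :=
  [/\ tBlin F, tBlin G, injective F,
      (forall z, exists y, G y = z) /\ (forall y, G y = 0 <-> exists x, y = F x)
    & exists r : tens N -> tens M, tBlin r /\ forall t, r (F t) = t].

Definition E_H (M N L : lmodType B) (f : M -> N) (g : N -> L) : Prop :=
  [/\ Blin f, Blin g, injective f,
      (forall z, exists y, g y = z) /\ (forall y, g y = 0 <-> exists x, y = f x)
    & split_exact_tens (tmap f) (tmap g)].

End Modules.
End Tensors.

Section ExactStructure.
Variables (B : pzRingType).

Definition Bhom (M N : lmodType B) (f : M -> N) : Prop :=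
  forall (a : B) (x y : M), f (a *: x + y) = a *: f x + f y.

Definition mclass := forall M N L : lmodType B, (M -> N) -> (N -> L) -> Prop.

Definition is_kernel (M N L : lmodType B) (f : M -> N) (g : N -> L) : Prop :=
  (forall x, g (f x) = 0) /\
  forall (X : lmodType B) (u : X -> N), Bhom u -> (forall x, g (u x) = 0) ->
    (exists v : X -> M, Bhom v /\ forall x, f (v x) = u x) /\
    (forall v1 v2 : X -> M, Bhom v1 -> Bhom v2 ->
       (forall x, f (v1 x) = u x) -> (forall x, f (v2 x) = u x) -> v1 =1 v2).

Definition is_cokernel (M N L : lmodType B) (f : M -> N) (g : N -> L) : Prop :=
  (forall x, g (f x) = 0) /\
  forall (X : lmodType B) (u : N -> X), Bhom u -> (forall x, u (f x) = 0) ->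
    (exists v : L -> X, Bhom v /\ forall y, v (g y) = u y) /\
    (forall v1 v2 : L -> X, Bhom v1 -> Bhom v2 ->
       (forall y, v1 (g y) = u y) -> (forall y, v2 (g y) = u y) -> v1 =1 v2).

Definition deflation (E : mclass) (N L : lmodType B) (g : N -> L) : Prop :=
  exists (M : lmodType B) (f : M -> N), E M N L f g.
Definition inflation (E : mclass) (M N : lmodType B) (f : M -> N) : Prop :=
  exists (L : lmodType B) (g : N -> L), E M N L f g.

Definition is_pullback (N L L' P : lmodType B) (g : N -> L) (h : L' -> L)
    (p1 : P -> N) (p2 : P -> L') : Prop :=
  [/\ Bhom p1, Bhom p2, (forall x, g (p1 x) = h (p2 x))
    & forall (X : lmodType B) (u1 : X -> N) (u2 : X -> L'), Bhom u1 -> Bhom u2 ->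
      (forall x, g (u1 x) = h (u2 x)) ->
      (exists v : X -> P, [/\ Bhom v, forall x, p1 (v x) = u1 x
                                      & forall x, p2 (v x) = u2 x]) /\
      (forall v1 v2 : X -> P, Bhom v1 -> Bhom v2 ->
         (forall x, p1 (v1 x) = u1 x) -> (forall x, p2 (v1 x) = u2 x) ->
         (forall x, p1 (v2 x) = u1 x) -> (forall x, p2 (v2 x) = u2 x) ->
         v1 =1 v2)].

Definition is_pushout (M N M' Q : lmodType B) (f : M -> N) (h : M -> M')
    (q1 : N -> Q) (q2 : M' -> Q) : Prop :=
  [/\ Bhom q1, Bhom q2, (forall x, q1 (f x) = q2 (h x))
    & forall (X : lmodType B) (u1 : N -> X) (u2 : M' -> X), Bhom u1 -> Bhom u2 ->
      (forall x, u1 (f x) = u2 (h x)) ->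
      (exists v : Q -> X, [/\ Bhom v, forall y, v (q1 y) = u1 y
                                      & forall y, v (q2 y) = u2 y]) /\
      (forall v1 v2 : Q -> X, Bhom v1 -> Bhom v2 ->
         (forall y, v1 (q1 y) = u1 y) -> (forall y, v1 (q2 y) = u2 y) ->
         (forall y, v2 (q1 y) = u1 y) -> (forall y, v2 (q2 y) = u2 y) ->
         v1 =1 v2)].

Definition exact_structure (E : mclass) : Prop :=
  [/\
      (forall (M N L : lmodType B) (f : M -> N) (g : N -> L), E M N L f g ->
         [/\ Bhom f, Bhom g, is_kernel f g & is_cokernel f g]),
      (forall Z : lmodType B, (forall z : Z, z = 0) -> deflation E (@id Z)),
      (forall (N L P : lmodType B) (g1 : N -> L) (g2 : L -> P),
         deflation E g1 -> deflation E g2 -> deflation E (g2 \o g1)) /\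
      (forall (M N P : lmodType B) (f1 : M -> N) (f2 : N -> P),
         inflation E f1 -> inflation E f2 -> inflation E (f2 \o f1)),
      (forall (N L L' : lmodType B) (g : N -> L) (h : L' -> L),
         deflation E g -> Bhom h ->
         (exists (P : lmodType B) (p1 : P -> N) (p2 : P -> L'), is_pullback g h p1 p2) /\
         (forall (P : lmodType B) (p1 : P -> N) (p2 : P -> L'),
            is_pullback g h p1 p2 -> deflation E p2))
    &
      (forall (M N M' : lmodType B) (f : M -> N) (h : M -> M'),
         inflation E f -> Bhom h ->
         (exists (Q : lmodType B) (q1 : N -> Q) (q2 : M' -> Q), is_pushout f h q1 q2) /\
         (forall (Q : lmodType B) (q1 : N -> Q) (q2 : M' -> Q),
            is_pushout f h q1 q2 -> inflation E q2))].

End ExactStructure.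

(* Main.v *)
Require Import Defs.
From HB Require Import structures.
From mathcomp Require Import all_boot all_order all_algebra.
From mathcomp Require Import falgebra.
From Stdlib Require Import ClassicalEpsilon.
Set Implicit Arguments. Unset Strict Implicit. Unset Printing Implicit Defensive.
Import GRing.Theory.
Local Open Scope ring_scope.

Section BhomL.
Variables (B : pzRingType) (M N : lmodType B) (f : M -> N) (hf : Bhom f).
Lemma Bhom0 : f 0 = 0.
Proof. have e := hf 1 0 0; rewrite scale1r addr0 scale1r in e; apply: (addIr (f 0)); by rewrite add0r -e. Qed.
Lemma BhomD x y : f (x + y) = f x + f y.
Proof. by have := hf 1 x y; rewrite !scale1r. Qed.
Lemma BhomZ a x : f (a *: x) = a *: f x.
Proof. by have := hf a x 0; rewrite !addr0 Bhom0 addr0. Qed.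
Lemma BhomN x : f (- x) = - f x.
Proof. by rewrite -scaleN1r BhomZ scaleN1r. Qed.
Lemma BhomB x y : f (x - y) = f x - f y.
Proof. by rewrite BhomD BhomN. Qed.
End BhomL.

Lemma Bhom_comp (B : pzRingType) (M N P : lmodType B) (f : M -> N) (g : N -> P) :
  Bhom f -> Bhom g -> Bhom (g \o f).
Proof. by move=> hf hg a x y /=; rewrite hf hg. Qed.

Lemma pairLE (B : pzRingType) (N M : lmodType B) a (x y : N) (u v : M) :
  a *: (x, u) + (y, v) = (a *: x + y, a *: u + v).
Proof. reflexivity. Qed.
Lemma pairD' (B : pzRingType) (N M : lmodType B) (x y : N) (u v : M) :
  (x, u) + (y, v) = (x + y, u + v).
Proof. reflexivity. Qed.
Lemma pairB' (B : pzRingType) (N M : lmodType B) (x y : N) (u v : M) :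
  (x, u) - (y, v) = (x - y, u - v).
Proof. reflexivity. Qed.

Section Sub.
Variables (B : pzRingType) (V : lmodType B) (P : V -> Prop).
Definition submod := P 0 /\ forall a x y, P x -> P y -> P (a *: x + y).
Definition Sb (v : V) : bool :=
  if excluded_middle_informative (submod -> P v) then true else false.
Lemma SbP v : reflect (submod -> P v) (Sb v).
Proof. by rewrite /Sb; case: excluded_middle_informative => h; constructor. Qed.
Lemma SbE v : submod -> Sb v = true <-> P v.
Proof. move=> sP; split; first by move/SbP; apply. by move=> Pv; apply/SbP. Qed.
Lemma Sb0 : Sb 0.
Proof. by apply/SbP => -[]. Qed.
Lemma SbL a x y : Sb x -> Sb y -> Sb (a *: x + y).
Proof. move=> /SbP hx /SbP hy; apply/SbP => sP; case: (sP) => _ h; exact: h (hx sP) (hy sP). Qed.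
Lemma SbD x y : Sb x -> Sb y -> Sb (x + y).
Proof. by move=> hx hy; have := SbL 1 hx hy; rewrite scale1r. Qed.
Lemma SbZ a x : Sb x -> Sb (a *: x).
Proof. by move=> hx; have := SbL a hx Sb0; rewrite addr0. Qed.
Lemma SbN x : Sb x -> Sb (- x).
Proof. by move=> hx; have := SbZ (-1) hx; rewrite scaleN1r. Qed.
Lemma SbB x y : Sb x -> Sb y -> Sb (x - y).
Proof. by move=> hx hy; apply: SbD => //; apply: SbN. Qed.

Definition subT := {v : V | Sb v}.
HB.instance Definition _ := Choice.copy subT {v : V | Sb v}.
Definition s0 : subT := exist _ 0 Sb0.
Definition sadd (x y : subT) : subT := exist _ (sval x + sval y) (SbD (svalP x) (svalP y)).
Definition sopp (x : subT) : subT := exist _ (- sval x) (SbN (svalP x)).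
Definition sscale a (x : subT) : subT := exist _ (a *: sval x) (SbZ a (svalP x)).
Lemma subT_inj (x y : subT) : sval x = sval y -> x = y.
Proof. move: x y => [x hx] [y hy] /= e; subst y; congr exist; exact: bool_irrelevance. Qed.
Lemma saddA : associative sadd.
Proof. by move=> x y z; apply: subT_inj; rewrite /= addrA. Qed.
Lemma saddC : commutative sadd.
Proof. by move=> x y; apply: subT_inj; rewrite /= addrC. Qed.
Lemma sadd0 : left_id s0 sadd.
Proof. by move=> x; apply: subT_inj; rewrite /= add0r. Qed.
Lemma saddN : left_inverse s0 sopp sadd.
Proof. by move=> x; apply: subT_inj; rewrite /= addNr. Qed.
HB.instance Definition _ := GRing.isZmodule.Build subT saddA saddC sadd0 saddN.
Lemma sscaleA a b v : sscale a (sscale b v) = sscale (a * b) v.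
Proof. by apply: subT_inj; rewrite /= scalerA. Qed.
Lemma sscale1 : left_id 1 sscale.
Proof. by move=> x; apply: subT_inj; rewrite /= scale1r. Qed.
Lemma sscaleDr : right_distributive sscale +%R.
Proof. by move=> a x y; apply: subT_inj; rewrite /= scalerDr. Qed.
Lemma sscaleDl v : {morph sscale^~ v: a b / a + b}.
Proof. by move=> a b; apply: subT_inj; rewrite /= scalerDl. Qed.
HB.instance Definition _ := GRing.Zmodule_isLmodule.Build B subT sscaleA sscale1 sscaleDr sscaleDl.
Check (subT : lmodType B).
Lemma sval_Bhom : Bhom (fun x : subT => sval x).
Proof. by []. Qed.
Definition sinj (v : V) : subT :=
  match Bool.bool_dec (Sb v) true with left h => exist _ v h | right _ => s0 end.
Lemma sinjK v : Sb v -> sval (sinj v) = v.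
Proof. by rewrite /sinj; case: Bool.bool_dec. Qed.
End Sub.


Section Quot.
Variables (B : pzRingType) (V : lmodType B) (P : V -> Prop).
Local Notation S := (Sb P).
Definition rl (u w : V) := S (u - w).
Lemma rl_refl u : rl u u. Proof. by rewrite /rl subrr Sb0. Qed.
Lemma rl_sym u w : rl u w -> rl w u.
Proof. by rewrite /rl => h; rewrite -opprB; apply: SbN. Qed.
Lemma rl_trans u v w : rl u v -> rl v w -> rl u w.
Proof. by rewrite /rl => h1 h2; have := SbD h1 h2; rewrite addrA subrK. Qed.
Lemma rlD u u' w w' : rl u u' -> rl w w' -> rl (u + w) (u' + w').
Proof. by rewrite /rl => h1 h2; rewrite opprD addrACA; apply: SbD. Qed.
Lemma rlN u u' : rl u u' -> rl (- u) (- u').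
Proof. by rewrite /rl => h; rewrite -opprD; apply: SbN. Qed.
Lemma rlZ a u u' : rl u u' -> rl (a *: u) (a *: u').
Proof. by rewrite /rl => h; rewrite -scalerBr; apply: SbZ. Qed.

Definition canon (v : V) : V := xchoose (ex_intro (fun w => rl v w) v (rl_refl v)).
Lemma canonP v : rl v (canon v). Proof. exact: (xchooseP (ex_intro (fun w => rl v w) v (rl_refl v))). Qed.
Lemma canon_eq u w : rl u w -> canon u = canon w.
Proof.
move=> h; apply: eq_xchoose => x; apply/idP/idP => hx.
  exact: rl_trans (rl_sym h) hx.
exact: rl_trans h hx.
Qed.
Lemma canonK v : canon (canon v) = canon v.
Proof. by apply: canon_eq; apply: rl_sym; apply: canonP. Qed.

Definition quotT := {v : V | canon v == v}.
HB.instance Definition _ := Choice.copy quotT {v : V | canon v == v}.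
Definition qpi (v : V) : quotT := exist _ (canon v) (introT eqP (canonK v)).
Lemma quotT_inj (x y : quotT) : sval x = sval y -> x = y.
Proof. move: x y => [x hx] [y hy] /= e; subst y; congr exist; exact: bool_irrelevance. Qed.
Lemma piK (x : quotT) : qpi (sval x) = x.
Proof. by apply: quotT_inj => /=; apply/eqP; case: x. Qed.
Lemma qpi_eq u w : rl u w -> qpi u = qpi w.
Proof. by move=> h; apply: quotT_inj => /=; apply: canon_eq. Qed.
Lemma qpi_eqE u w : qpi u = qpi w -> rl u w.
Proof.
move=> /(congr1 sval) /= e; apply: rl_trans (canonP u) _.
by rewrite e; apply: rl_sym; apply: canonP.
Qed.
Lemma rl_qpi u : rl (sval (qpi u)) u. Proof. exact: rl_sym (canonP u). Qed.

Definition q0 : quotT := qpi 0.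
Definition qadd (x y : quotT) : quotT := qpi (sval x + sval y).
Definition qopp (x : quotT) : quotT := qpi (- sval x).
Definition qscale a (x : quotT) : quotT := qpi (a *: sval x).
Lemma qaddA : associative qadd.
Proof.
move=> x y z; rewrite /qadd; apply: qpi_eq.
apply: rl_trans (rlD (rl_refl _) (rl_qpi _)) _; rewrite addrA.
by apply: rlD (rl_sym (rl_qpi _)) (rl_refl _).
Qed.
Lemma qaddC : commutative qadd.
Proof. by move=> x y; rewrite /qadd addrC. Qed.
Lemma qadd0 : left_id q0 qadd.
Proof.
move=> x; rewrite -[RHS]piK; apply: qpi_eq.
by rewrite -[X in rl _ X]add0r; apply: rlD (rl_qpi _) (rl_refl _).
Qed.
Lemma qaddN : left_inverse q0 qopp qadd.
Proof.
move=> x; apply: qpi_eq; rewrite -(addNr (sval x)).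
by apply: rlD (rl_qpi _) (rl_refl _).
Qed.
HB.instance Definition _ := GRing.isZmodule.Build quotT qaddA qaddC qadd0 qaddN.
Lemma qscaleA a b v : qscale a (qscale b v) = qscale (a * b) v.
Proof. by apply: qpi_eq; rewrite -scalerA; apply: rlZ; apply: rl_qpi. Qed.
Lemma qscale1 : left_id 1 qscale.
Proof. by move=> x; rewrite /qscale scale1r piK. Qed.
Lemma qscaleDr : right_distributive qscale +%R.
Proof.
move=> a x y; apply: qpi_eq; rewrite /=.
apply: rl_trans (rlZ a (rl_qpi _)) _; rewrite scalerDr.
by apply: rlD; apply: rl_sym; apply: rl_qpi.
Qed.
Lemma qscaleDl v : {morph qscale^~ v: a b / a + b}.
Proof.
move=> a b; apply: qpi_eq; rewrite /= scalerDl.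
by apply: rlD; apply: rl_sym; apply: rl_qpi.
Qed.
HB.instance Definition _ := GRing.Zmodule_isLmodule.Build B quotT qscaleA qscale1 qscaleDr qscaleDl.

Lemma qpi_Bhom : Bhom qpi.
Proof.
move=> a x y; apply: qpi_eq; rewrite /=.
apply: rlD; last by apply: rl_sym; apply: rl_qpi.
by apply: rl_trans (rlZ a (rl_sym (rl_qpi _))) (rl_sym (rl_qpi _)).
Qed.
Lemma qpi_surj (z : quotT) : exists v, qpi v = z.
Proof. by exists (sval z); apply: piK. Qed.
Lemma pi0 v : qpi v = 0 <-> S v.
Proof.
split => [h|h].
  by have := qpi_eqE h; rewrite /rl subr0.
by apply: qpi_eq; rewrite /rl subr0.
Qed.
Section Lift.
Variables (X : lmodType B) (w : V -> X) (hw : Bhom w) (hk : forall v, S v -> w v = 0).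
Lemma rl_kill u u' : rl u u' -> w u = w u'.
Proof. by move=> h; apply/eqP; rewrite -subr_eq0 -(BhomB hw) hk. Qed.
Lemma qpi_kill u : w (sval (qpi u)) = w u.
Proof. exact: rl_kill (rl_qpi u). Qed.
Lemma qlift_Bhom : Bhom (fun z : quotT => w (sval z)).
Proof.
move=> a z z'.
have e : a *: z + z' = qpi (a *: sval z + sval z') by rewrite qpi_Bhom !piK.
by rewrite e qpi_kill hw.
Qed.
End Lift.
End Quot.


Section Tens.
Variables (k : fieldType) (H : falgType k) (B : algType k) (DB : B -> tens H B).
Hypothesis hDB1 : DB 1 = tone H B.
Local Notation tm := (@tmap k H _ _).
Local Notation ta := (@tact k H B DB _).
Local Notation hb := (@hb k H).
Local Notation hc := (@hc k H).

Lemma tactD (M : lmodType B) a (t s : tens H M) : ta a (t + s) = ta a t + ta a s.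
Proof.
apply/ffunP => l; rewrite !ffunE -big_split /=; apply: eq_bigr => i _.
rewrite -big_split /=; apply: eq_bigr => j _.
by rewrite !ffunE !scalerDr.
Qed.
Lemma tact0 (M : lmodType B) a : ta a (0 : tens H M) = 0.
Proof. have e := tactD a (0 : tens H M) 0; rewrite addr0 in e; apply: (addIr (ta a 0)); by rewrite add0r -e. Qed.
Lemma tactN (M : lmodType B) a (t : tens H M) : ta a (- t) = - ta a t.
Proof. by apply/eqP; rewrite -addr_eq0 -tactD addNr tact0. Qed.
Lemma tactB (M : lmodType B) a (t s : tens H M) : ta a (t - s) = ta a t - ta a s.
Proof. by rewrite tactD tactN. Qed.

Lemma hbE i : hb i = (vbasis (fullv : {vspace H}))`_i.
Proof. by rewrite /hb (tnth_nth 0). Qed.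
Lemma hc_hb l j : hc l (hb j) = (j == l)%:R.
Proof. by rewrite /hc hbE coord_free //; apply: basis_free (vbasisP _). Qed.
Lemma sum_hc (h : H) : \sum_i hc i h *: hb i = h.
Proof. by rewrite [RHS](coord_vbasis (memvf h)); apply: eq_bigr => i _; rewrite hbE. Qed.

Lemma algZZ (M : lmodType B) (a b : k) (m : M) :
  (a%:A : B) *: ((b *: (1 : B)) *: m) = ((a * b)%:A : B) *: m.
Proof. by rewrite scalerA -scalerAl mul1r scalerA. Qed.
Lemma sum_algZ (M : lmodType B) (I : finType) (a : I -> k) (m : M) :
  \sum_i ((a i)%:A : B) *: m = ((\sum_i a i)%:A : B) *: m.
Proof. by rewrite -scaler_suml; congr (_ *: _); rewrite scaler_suml. Qed.

Lemma tact1 (M : lmodType B) (t : tens H M) : ta 1 t = t.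
Proof.
apply/ffunP => l; rewrite ffunE hDB1.
have e j : \sum_i hc l (hb i * hb j) * hc i 1 = (j == l)%:R.
  rewrite -hc_hb; transitivity (hc l ((\sum_i hc i 1 *: hb i) * hb j)); last by rewrite sum_hc mul1r.
  rewrite mulr_suml /hc linear_sum.
  by apply: eq_bigr => i _; rewrite -scalerAl linearZ /= mulrC.
transitivity (\sum_j (((j == l)%:R : k)%:A : B) *: t j).
  rewrite exchange_big; apply: eq_bigr => j _ /=.
  rewrite -e -sum_algZ; apply: eq_bigr => i _.
  by rewrite ffunE algZZ.
rewrite (bigD1 l) //= eqxx scale1r big1 ?addr0 ?scale1r // => j /negbTE ->.
by rewrite scale0r scale0r.
Qed.

Section TM.
Variables (M N : lmodType B) (f : M -> N) (hf : Bhom f).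
Lemma tmapD (t s : tens H M) : tm f (t + s) = tm f t + tm f s.
Proof. by apply/ffunP => i; rewrite !ffunE (BhomD hf). Qed.
Lemma tmap0 : tm f (0 : tens H M) = 0.
Proof. by apply/ffunP => i; rewrite !ffunE (Bhom0 hf). Qed.
Lemma tmap_tact a (t : tens H M) : tm f (ta a t) = ta a (tm f t).
Proof.
apply/ffunP => l; rewrite !ffunE (big_morph f (BhomD hf) (Bhom0 hf)).
apply: eq_bigr => i _; rewrite (big_morph f (BhomD hf) (Bhom0 hf)).
by apply: eq_bigr => j _; rewrite !(BhomZ hf) ffunE.
Qed.
Lemma tBlin_tmap : tBlin DB (tm f).
Proof. by move=> a t s; rewrite tmapD tmap_tact. Qed.
End TM.

Section TB.
Variables (M N : lmodType B) (r : tens H M -> tens H N) (hr : tBlin DB r).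
Lemma tBlinD t s : r (t + s) = r t + r s.
Proof. by have := hr 1 t s; rewrite !tact1. Qed.
Lemma tBlin0 : r 0 = 0.
Proof. have e := tBlinD 0 0; rewrite addr0 in e; apply: (addIr (r 0)); by rewrite add0r -e. Qed.
Lemma tBlinN t : r (- t) = - r t.
Proof. by apply/eqP; rewrite -addr_eq0 -tBlinD addNr tBlin0. Qed.
Lemma tBlinB t s : r (t - s) = r t - r s.
Proof. by rewrite tBlinD tBlinN. Qed.
Lemma tBlinA a t : r (ta a t) = ta a (r t).
Proof. by have := hr a t 0; rewrite !addr0 tBlin0 addr0. Qed.
End TB.

Lemma tBlin_comp (M N P : lmodType B) (r : tens H M -> tens H N) (s : tens H N -> tens H P) :
  tBlin DB r -> tBlin DB s -> tBlin DB (s \o r).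
Proof. by move=> hr hs a t u /=; rewrite hr hs. Qed.
Lemma tBlin_sub (M N : lmodType B) (r s : tens H M -> tens H N) :
  tBlin DB r -> tBlin DB s -> tBlin DB (fun t => r t - s t).
Proof. by move=> hr hs a t u; rewrite hr hs tactB opprD addrACA. Qed.
Lemma tBlin_id (M : lmodType B) : tBlin DB (fun t : tens H M => t).
Proof. by []. Qed.

Lemma tmap_comp (M N P : Type) (f : M -> N) (g : N -> P) (t : tens H M) :
  tm (g \o f) t = tm g (tm f t).
Proof. by apply/ffunP => i; rewrite !ffunE. Qed.

Lemma tmap_inj (M N : Type) (f : M -> N) : injective f -> injective (tm f).
Proof.
move=> hf t s e; apply/ffunP => i; apply: hf.
by have := congr1 (fun F : tens H _ => F i) e; rewrite !ffunE.
Qed.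
Lemma tmap_surj (M N : Type) (f : M -> N) :
  (forall z, exists y, f y = z) -> forall z : tens H N, exists y, tm f y = z.
Proof.
move=> hf z; exists [ffun i => proj1_sig (constructive_indefinite_description _ (hf (z i)))].
apply/ffunP => i; rewrite !ffunE.
exact: proj2_sig (constructive_indefinite_description _ (hf (z i))).
Qed.
Lemma tmap_exact (M N L : lmodType B) (f : M -> N) (g : N -> L) :
  Bhom g ->
  (forall y, g y = 0 <-> exists x, y = f x) ->
  forall y : tens H N, tm g y = 0 <-> exists x, y = tm f x.
Proof.
move=> hg he y; split.
  move=> e.
  have hx i : exists x, y i = f x.
    by apply/he; have := congr1 (fun F : tens H _ => F i) e; rewrite !ffunE.
  exists [ffun i => proj1_sig (constructive_indefinite_description _ (hx i))].
  apply/ffunP => i; rewrite !ffunE.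
  exact: proj2_sig (constructive_indefinite_description _ (hx i)).
move=> [x ->]; apply/ffunP => i; rewrite !ffunE; apply/he; by exists (x i).
Qed.

Lemma mkE (M N L : lmodType B) (f : M -> N) (g : N -> L) :
  Bhom f -> Bhom g -> injective f -> (forall z, exists y, g y = z) ->
  (forall y, g y = 0 <-> exists x, y = f x) ->
  (exists r : tens H N -> tens H M, tBlin DB r /\ forall t, r (tm f t) = t) ->
  E_H DB f g.
Proof.
move=> hf hg fi gs ex hr; split => //.
split => //; [exact: tBlin_tmap|exact: tBlin_tmap|exact: tmap_inj|].
split; [exact: tmap_surj|exact: tmap_exact].
Qed.

Lemma split_section (M N L : lmodType B) (F : tens H M -> tens H N) (G : tens H N -> tens H L) :
  split_exact_tens DB F G -> exists s, tBlin DB s /\ forall z, G (s z) = z.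
Proof.
move=> [hF hG Fi [Gs Gex] [r [hr rr]]].
pose c z := proj1_sig (constructive_indefinite_description _ (Gs z)).
have cP z : G (c z) = z := proj2_sig (constructive_indefinite_description _ (Gs z)).
pose s z := c z - F (r (c z)).
have GF x : G (F x) = 0 by apply/Gex; exists x.
have sP y : s (G y) = y - F (r y).
  have : G (c (G y) - y) = 0 by rewrite (tBlinB hG) cP subrr.
  move/Gex => [x ex].
  rewrite /s; have -> : c (G y) = y + F x by rewrite -ex addrC subrK.
  by rewrite (tBlinD hr) rr (tBlinD hF) opprD addrACA subrr addr0.
exists s; split.
  move=> a z z'; have [y <-] := Gs z; have [y' <-] := Gs z'.
  have -> : ta a (G y) + G y' = G (ta a y + y') by rewrite hG.
  by rewrite !sP hr hF tactB opprD addrACA.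
by move=> z; rewrite /s (tBlinB hG) GF subr0 cP.
Qed.
End Tens.


Definition cid' (A : Type) (P : A -> Prop) (h : exists x, P x) : A :=
  proj1_sig (constructive_indefinite_description _ h).
Lemma cid'P (A : Type) (P : A -> Prop) (h : exists x, P x) : P (cid' h).
Proof. exact: proj2_sig (constructive_indefinite_description _ h). Qed.

Section KC.
Variables (B : pzRingType) (M N L : lmodType B) (f : M -> N) (g : N -> L).
Hypotheses (hf : Bhom f) (hg : Bhom g) (fi : injective f)
  (gs : forall z, exists y, g y = z) (ex : forall y, g y = 0 <-> exists x, y = f x).

Lemma gf0 x : g (f x) = 0.
Proof. by apply/ex; exists x. Qed.

Lemma conf_kernel : is_kernel f g.
Proof.
split; first exact: gf0.
move=> X u hu hgu.
have hx x : exists m, f m = u x by have [m e] := (ex (u x)).1 (hgu x); exists m; rewrite e.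
split.
  exists (fun x => cid' (hx x)); split; last by move=> x; exact: (cid'P (hx x)).
  move=> a x y; apply: fi; rewrite hf (cid'P (hx (a *: x + y))) (cid'P (hx x)) (cid'P (hx y)); exact: hu.
by move=> v1 v2 _ _ h1 h2 x; apply: fi; rewrite h1 h2.
Qed.

Lemma conf_cokernel : is_cokernel f g.
Proof.
split; first exact: gf0.
move=> X u hu huf.
have wd y y' : g y = g y' -> u y = u y'.
  move=> e; apply/eqP; rewrite -subr_eq0 -(BhomB hu); apply/eqP.
  have : g (y - y') = 0 by rewrite (BhomB hg) e subrr.
  by move/ex => [m ->]; exact: huf.
split.
  exists (fun z => u (cid' (gs z))); split; last first.
    by move=> y; apply: wd; rewrite (cid'P (gs (g y))).
  move=> a z z'; rewrite -hu; apply: wd; by rewrite hg (cid'P (gs z)) (cid'P (gs z')) (cid'P (gs (a *: z + z'))).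
by move=> v1 v2 _ _ h1 h2 z; have [y <-] := gs z; rewrite h1 h2.
Qed.
End KC.


Section Main.
Variables (k : fieldType) (H : falgType k) (B : algType k) (DB : B -> tens H B).
Hypothesis hDB1 : DB 1 = tone H B.
Local Notation tm := (@tmap k H _ _).
Local Notation ta := (@tact k H B DB _).
Local Notation E := (@E_H k H B DB).

Lemma zero_defl (Z : lmodType B) : (forall z : Z, z = 0) -> deflation E (@id Z).
Proof.
move=> hZ; exists Z, id; apply: mkE => //.
- by move=> z; exists z.
- by move=> y; split => [_|_]; [exists y| exact: hZ].
exists (fun t => t); split; first exact: tBlin_id.
by move=> t; apply/ffunP => i; rewrite ffunE.
Qed.

Lemma infl_comp (M N P : lmodType B) (f1 : M -> N) (f2 : N -> P) :
  inflation E f1 -> inflation E f2 -> inflation E (f2 \o f1).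
Proof.
move=> [L1 [g1 [hf1 _ fi1 _ [_ _ _ _ [r1 [hr1 rr1]]]]]].
move=> [L2 [g2 [hf2 _ fi2 _ [_ _ _ _ [r2 [hr2 rr2]]]]]].
pose P0 := fun y : P => exists m, y = f2 (f1 m).
have sP : submod P0.
  split; first by exists 0; rewrite (Bhom0 hf1) (Bhom0 hf2).
  by move=> a x y [m ->] [m' ->]; exists (a *: m + m'); rewrite hf1 hf2.
exists (quotT P0), (@qpi _ _ P0); apply: mkE.
- exact: Bhom_comp.
- exact: qpi_Bhom.
- by move=> x y /= e; apply: fi1; apply: fi2.
- exact: qpi_surj.
- by move=> y; rewrite pi0; exact: (SbE y sP).
exists (r1 \o r2); split; first exact: tBlin_comp.
by move=> t /=; rewrite tmap_comp rr2 rr1.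
Qed.

Lemma regBhom (X : lmodType B) (x : X) : Bhom (fun b : B^o => b *: x).
Proof. by move=> a b c; rewrite scalerDl scalerA. Qed.
Lemma const0Bhom (X Y : lmodType B) : Bhom (fun _ : X => (0 : Y)).
Proof. by move=> a x y; rewrite scaler0 addr0. Qed.

Lemma pb_exists (N L L' : lmodType B) (g : N -> L) (h : L' -> L) :
  Bhom g -> Bhom h ->
  exists (P : lmodType B) (p1 : P -> N) (p2 : P -> L'), is_pullback g h p1 p2.
Proof.
move=> hg hh.
pose P0 := fun x : N * L' => g x.1 = h x.2.
have sP : submod P0.
  split; first by rewrite /P0 /= (Bhom0 hg) (Bhom0 hh).
  by move=> a x y; rewrite /P0 /= hg hh => -> ->.
exists (subT P0), (fun x => (sval x).1), (fun x => (sval x).2); split.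
- by move=> a x y.
- by move=> a x y.
- by move=> x; exact: (SbE (sval x) sP).1 (svalP x).
move=> X u1 u2 hu1 hu2 hc; split.
  have hs x : sval (sinj P0 (u1 x, u2 x)) = (u1 x, u2 x).
    by apply: sinjK; apply/(SbE _ sP); exact: hc.
  exists (fun x => sinj P0 (u1 x, u2 x)); split.
  - move=> a x y; apply: subT_inj; rewrite sval_Bhom !hs hu1 hu2 //.
  - by move=> x; rewrite hs.
  - by move=> x; rewrite hs.
move=> v1 v2 _ _ h11 h12 h21 h22 x; apply: subT_inj.
rewrite [sval (v1 x)]surjective_pairing [sval (v2 x)]surjective_pairing.
by rewrite h11 h12 h21 h22.
Qed.

Lemma pb_defl (N L L' : lmodType B) (g : N -> L) (h : L' -> L) :
  deflation E g -> Bhom h ->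
  forall (P : lmodType B) (p1 : P -> N) (p2 : P -> L'),
    is_pullback g h p1 p2 -> deflation E p2.
Proof.
move=> [M [f [hf hg fi [gs ex] [_ _ _ _ [r [hr rr]]]]]] hh P p1 p2 [hp1 hp2 hc hu].
have hgf m : g (f m) = h 0 by rewrite (Bhom0 hh); apply/ex; exists m.
have [[v [hv vp1 vp2]] _] := hu M f (fun _ => 0) hf (@const0Bhom _ _) hgf.
exists M, v; apply: mkE => //.
- by move=> x y e; apply: fi; rewrite -!vp1 e.
- move=> l'; have [n en] := gs (h l').
  have hc' : forall b : B^o, g (b *: n) = h (b *: l').
    by move=> b; rewrite (BhomZ hg) en (BhomZ hh).
  have [[w [_ _ w2]] _] := hu B^o _ _ (regBhom n) (regBhom l') hc'.
  by exists (w 1); rewrite w2 scale1r.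
- move=> x; split; last by move=> [m ->]; exact: vp2.
  move=> e; have : g (p1 x) = 0 by rewrite hc e (Bhom0 hh).
  move/ex => [m em]; exists m.
  have hc' : forall b : B^o, g (b *: f m) = h ((fun _ => 0) b).
    by move=> b; rewrite (BhomZ hg) hgf (Bhom0 hh) scaler0.
  have [_ uniq] := hu B^o _ _ (regBhom (f m)) (@const0Bhom _ _) hc'.
  have := uniq (fun b => b *: x) (fun b => b *: v m) (regBhom x) (regBhom (v m)).
  move/(_ _ _ _ _ 1); rewrite !scale1r; apply.
  + by move=> b; rewrite (BhomZ hp1) em.
  + by move=> b; rewrite (BhomZ hp2) e scaler0.
  + by move=> b; rewrite (BhomZ hp1) vp1.
  + by move=> b; rewrite (BhomZ hp2) vp2 scaler0.
exists (r \o tm p1); split; first by apply: tBlin_comp => //; apply: tBlin_tmap.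
move=> t /=; rewrite -tmap_comp.
have -> : tm (p1 \o v) t = tm f t by apply/ffunP => i; rewrite !ffunE /= vp1.
exact: rr.
Qed.

Lemma defl_comp (N L P : lmodType B) (g1 : N -> L) (g2 : L -> P) :
  deflation E g1 -> deflation E g2 -> deflation E (g2 \o g1).
Proof.
move=> [M1 [f1 [hf1 hg1 fi1 [gs1 ex1] sp1]]] [M2 [f2 [hf2 hg2 fi2 [gs2 ex2] sp2]]].
have [s1 [hs1 Gs1]] := split_section hDB1 sp1.
have [s2 [hs2 Gs2]] := split_section hDB1 sp2.
pose K := fun y : N => g2 (g1 y) = 0.
have sK : submod K.
  split; first by rewrite /K (Bhom0 hg1) (Bhom0 hg2).
  by move=> a x y; rewrite /K hg1 hg2 => -> ->; rewrite scaler0 addr0.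
exists (subT K), (fun x => sval x); apply: mkE.
- exact: sval_Bhom.
- exact: Bhom_comp.
- by move=> x y; exact: subT_inj.
- by move=> z; have [y <-] := gs2 z; have [x <-] := gs1 y; exists x.
- move=> y; split; last by move=> [x ->]; exact: (SbE _ sK).1 (svalP x).
  by move=> e; exists (sinj K y); rewrite sinjK //; apply/(SbE _ sK).
pose G := fun t : tens H N => tm g2 (tm g1 t).
have hG : tBlin DB G by apply: tBlin_comp; apply: tBlin_tmap.
pose rho0 := fun t => t - (s1 \o s2 \o G) t.
have hr0 : tBlin DB rho0.
  apply: tBlin_sub; first exact: tBlin_id.
  by apply: tBlin_comp => //; apply: tBlin_comp.
have hG0 t : G (rho0 t) = 0.
  rewrite /rho0 /G /= (tBlinB hDB1 (tBlin_tmap DB hg1)) Gs1.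
  by rewrite (tBlinB hDB1 (tBlin_tmap DB hg2)) Gs2 subrr.
have hK t i : Sb K (rho0 t i).
  apply/(SbE _ sK); have := congr1 (fun F : tens H P => F i) (hG0 t).
  by rewrite /G !ffunE.
pose rho t : tens H (subT K) := [ffun i => sinj K (rho0 t i)].
have hrho t : tm (fun x => sval x) (rho t) = rho0 t.
  apply/ffunP => i; rewrite !ffunE; apply: sinjK; have := hK t i; rewrite /rho0 ffunE. by rewrite ffunE.
have sinj' : injective (fun x : subT K => sval x) by move=> x y; exact: subT_inj.
exists rho; split.
  move=> a t u; apply: (tmap_inj sinj').
  by rewrite (tmapD (@sval_Bhom _ _ K)) (tmap_tact DB (@sval_Bhom _ _ K)) !hrho; exact: hr0.
move=> t; apply: (tmap_inj sinj'); rewrite hrho /rho0 /=.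
have -> : G (tm (fun x => sval x) t) = 0.
  apply/ffunP => i; rewrite !ffunE; exact: (SbE _ sK).1 (svalP (t i)).
by rewrite (tBlin0 hDB1 hs2) (tBlin0 hDB1 hs1) subr0.
Qed.

Section PO.
Variables (M N M' : lmodType B) (f : M -> N) (h : M -> M').
Hypotheses (hf : Bhom f) (hh : Bhom h).
Definition PO := fun x : N * M' => exists m, x = (f m, - h m).
Lemma sPO : submod PO.
Proof.
split; first by exists 0; rewrite (Bhom0 hf) (Bhom0 hh) oppr0.
move=> a x y [m ->] [m' ->]; exists (a *: m + m'); rewrite hf hh opprD -scalerN.
by [].
Qed.
Definition q10 (n : N) : quotT PO := qpi PO (n, 0).
Definition q20 (m' : M') : quotT PO := qpi PO (0, m').
Lemma q10_Bhom : Bhom q10.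
Proof.
move=> a x y; rewrite /q10 -qpi_Bhom; congr qpi.
by rewrite pairLE scaler0 addr0.
Qed.
Lemma q20_Bhom : Bhom q20.
Proof.
move=> a x y; rewrite /q20 -qpi_Bhom; congr qpi.
by rewrite pairLE scaler0 addr0.
Qed.
Lemma q0dec (z : quotT PO) : z = q10 (sval z).1 + q20 (sval z).2.
Proof.
rewrite /q10 /q20 -(BhomD (@qpi_Bhom _ _ PO)).
by rewrite pairD' addr0 add0r -surjective_pairing piK.
Qed.
Lemma q0compat m : q10 (f m) = q20 (h m).
Proof.
apply: qpi_eq; rewrite /rl; apply/(SbE _ sPO); exists m.
by rewrite pairB' subr0 sub0r.
Qed.
Section W.
Variables (X : lmodType B) (u1 : N -> X) (u2 : M' -> X).
Hypotheses (hu1 : Bhom u1) (hu2 : Bhom u2) (hc : forall m, u1 (f m) = u2 (h m)).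
Definition wl := fun x : N * M' => u1 x.1 + u2 x.2.
Lemma wl_Bhom : Bhom wl.
Proof. by move=> a [x1 x2] [y1 y2]; rewrite /wl pairLE /= hu1 hu2 scalerDr addrACA. Qed.
Lemma wl_kill v : Sb PO v -> wl v = 0.
Proof. by move/(SbE _ sPO) => [m ->]; rewrite /wl /= (BhomN hu2) hc subrr. Qed.
Lemma wl_pi x : wl (sval (qpi PO x)) = wl x.
Proof. exact: qpi_kill wl_Bhom wl_kill x. Qed.
Lemma wl_lift_Bhom : Bhom (fun z : quotT PO => wl (sval z)).
Proof. exact: qlift_Bhom wl_Bhom wl_kill. Qed.
Lemma wl_q1 n : wl (sval (q10 n)) = u1 n.
Proof. by rewrite /q10 wl_pi /wl /= (Bhom0 hu2) addr0. Qed.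
Lemma wl_q2 m' : wl (sval (q20 m')) = u2 m'.
Proof. by rewrite /q20 wl_pi /wl /= (Bhom0 hu1) add0r. Qed.
End W.

Lemma po_is : is_pushout f h q10 q20.
Proof.
split; [exact: q10_Bhom|exact: q20_Bhom|exact: q0compat|].
move=> X u1 u2 hu1 hu2 hc; split.
  exists (fun z => wl u1 u2 (sval z)); split.
  - exact: wl_lift_Bhom.
  - exact: wl_q1.
  - exact: wl_q2.
move=> v1 v2 hv1 hv2 e11 e12 e21 e22 z.
by rewrite (q0dec z) (BhomD hv1) (BhomD hv2) e11 e12 e21 e22.
Qed.
End PO.

Lemma po_infl (M N M' : lmodType B) (f : M -> N) (h : M -> M') :
  inflation E f -> Bhom h ->
  forall (Q : lmodType B) (q1 : N -> Q) (q2 : M' -> Q),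
    is_pushout f h q1 q2 -> inflation E q2.
Proof.
move=> [L [g [hf hg fi [gs ex] [_ _ _ _ [r [hr rr]]]]]] hh Q q1 q2 [hq1 hq2 hc hu].
have sP := sPO hf hh.
have [[psi [hpsi psi1 psi2]] _] :=
  hu _ _ _ (q10_Bhom f h) (q20_Bhom f h) (q0compat hf hh).
pose phi := fun z : quotT (PO f h) => wl q1 q2 (sval z).
have phipsi : forall x, phi (psi x) = x.
  have [_ uq] := hu Q q1 q2 hq1 hq2 hc.
  apply: (uq (phi \o psi) id) => //.
  - apply: Bhom_comp => //; exact: wl_lift_Bhom.
  - by move=> n /=; rewrite psi1 /phi (wl_q1 hf hh hq1 hq2 hc).
  - by move=> m' /=; rewrite psi2 /phi (wl_q2 hf hh hq1 hq2 hc).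
have dec x : q1 (sval (psi x)).1 + q2 (sval (psi x)).2 = x by exact: phipsi x.
have kerdec n m' : q1 n + q2 m' = 0 -> exists m, n = f m /\ m' = - h m.
  move=> e; have : psi (q1 n + q2 m') = 0 by rewrite e (Bhom0 hpsi).
  rewrite (BhomD hpsi) psi1 psi2 /q10 /q20 -(BhomD (@qpi_Bhom _ _ (PO f h))).
  rewrite pairD' addr0 add0r => /pi0 /(SbE _ sP) [m [-> ->]].
  by exists m.
have hgf m : g (f m) = (fun _ => 0) (h m) by apply/ex; exists m.
have [[g2 [hg2 g21 g22]] _] := hu L g (fun _ => 0) hg (@const0Bhom _ _) hgf.
exists L, g2; apply: mkE => //.
- move=> x y e.
  have : q1 0 + q2 (x - y) = 0 by rewrite (Bhom0 hq1) add0r (BhomB hq2) e subrr.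
  move/kerdec => [m [e0 e1]].
  have m0 : m = 0 by apply: fi; rewrite -e0 (Bhom0 hf).
  by apply/eqP; rewrite -subr_eq0 e1 m0 (Bhom0 hh) oppr0.
- by move=> l; have [n <-] := gs l; exists (q1 n); exact: g21.
- move=> x; split; last by move=> [m' ->]; exact: g22.
  rewrite -(dec x) (BhomD hg2) g21 g22 addr0 => /ex [m ->].
  by rewrite hc -(BhomD hq2); eexists.
pose TN := fun t : tens H Q => [ffun i => (sval (psi (t i))).1].
pose TM := fun t : tens H Q => [ffun i => (sval (psi (t i))).2].
pose r2 := fun t => tm h (r (TN t)) + TM t.
have tdec t : tm q1 (TN t) + tm q2 (TM t) = t.
  by apply/ffunP => i; rewrite !ffunE dec.
have key t TN' TM' : tm q1 TN' + tm q2 TM' = t -> r2 t = tm h (r TN') + TM'.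
  move=> e.
  have hm i : exists m, (TN t - TN') i = f m /\ (TM t - TM') i = - h m.
    apply: kerdec; rewrite !ffunE (BhomB hq1) (BhomB hq2) addrACA.
    have := congr1 (fun F : tens H Q => F i) (tdec t).
    have := congr1 (fun F : tens H Q => F i) e.
    by rewrite !ffunE => e1 e2; rewrite e2 -opprD e1 subrr.
  pose Tm := [ffun i => cid' (hm i)].
  have e1 : TN t = TN' + tm f Tm.
    apply/ffunP => i; rewrite !ffunE -(cid'P (hm i)).1 ffunE.
    by rewrite !ffunE addrC subrK.
  have e2 : TM t = TM' - tm h Tm.
    apply/ffunP => i; rewrite !ffunE -(cid'P (hm i)).2 ffunE.
    by rewrite !ffunE addrC subrK.
  by rewrite /r2 e1 e2 (tBlinD hDB1 hr) rr (tmapD hh) addrACA subrr addr0.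
exists r2; split.
  move=> a t s; rewrite (key _ (ta a (TN t) + TN s) (ta a (TM t) + TM s)).
    rewrite hr (tBlin_tmap DB hh).
    by rewrite /r2 tactD addrACA.
  rewrite (tBlin_tmap DB hq1) (tBlin_tmap DB hq2) addrACA -tactD.
  by rewrite !tdec.
move=> t; rewrite (key _ 0 t); last by rewrite (tmap0 H hq1) add0r.
by rewrite (tBlin0 hDB1 hr) (tmap0 H hh) add0r.
Qed.
End Main.


Theorem lemma3p1 (k : fieldType) (H : falgType k)
  (Delta : H -> tens H H) (eps : H -> k) (S : H -> H)
  (B : algType k) (DeltaB : B -> tens H B) :
  is_hopf Delta eps S ->
  is_comod_alg Delta eps DeltaB ->
  exact_structure (@E_H k H B DeltaB).
Proof.
move=> _ [_ hDB1 _ _ _]; split.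
- move=> M N L f g [hf hg fi [gs ex] _]; split => //.
    exact: conf_kernel.
  exact: conf_cokernel.
- by move=> Z hZ; apply: zero_defl.
- split; [exact: (defl_comp hDB1) | exact: infl_comp].
- move=> N L L' g h hd hh; split; last exact: pb_defl.
  by have [M [f [_ hg _ _ _]]] := hd; apply: pb_exists.
- move=> M N M' f h hi hh; split; last exact: (po_infl hDB1).
  have [L [g [hf _ _ _ _]]] := hi.
  by exists (quotT (PO f h)), (q10 f h), (q20 f h); apply: po_is.
Qed.
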